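(* Let $p$ be an odd prime and $n,k$ positive integers. Then $$\psi'(P^*(p^n,2^k))=\frac{p+1}{p^{2n+1}+1}+\frac{(p+1)(p^n-1)}{p^{2n+1}+1}\cdot\frac{(p+3)2^{2k-1}+p}{2^{2k+1}+1}.$$
   Context: For a finite group $G$, $\psi(G)=\sum_{x\in G} o(x)$ and $\psi'(G)=\psi(G)/\psi(\mathcal{C}_{|G|})$, where $\mathcal{C}_n$ is the cyclic group of order $n$. For an odd prime $p$ and positive integers $n,k$, $P^*(p^n,2^k)=A\rtimes\langle x\rangle$, where $A$ is elementary abelian of order $p^n$, $\langle x\rangle$ is cyclic of order $2^k$, and $x$ acts on $A$ by inversion $a\mapsto a^{-1}$. *)

(* Defs.v *)
From HB Require Import structures.
From mathcomp Require Import all_boot all_order all_algebra all_fingroup all_solvable.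
Set Implicit Arguments. Unset Strict Implicit. Unset Printing Implicit Defensive.

Definition psi (gT : finGroupType) (G : {set gT}) : nat := \sum_(x in G) #[x]%g.

(* Main.v *)
Require Import Defs.
From HB Require Import structures.
From mathcomp Require Import all_boot all_order all_algebra all_fingroup all_solvable.
Import GRing.Theory.
From mathcomp Require Import zify.

Lemma sum_split (gT : finGroupType) (B Y : {set gT}) (F : gT -> nat) :
  B \subset Y ->
  (\sum_(g in Y) F g = \sum_(g in B) F g + \sum_(g in Y :\: B) F g)%N.
Proof. by move=> sBY; rewrite (big_setID B) (setIidPr sBY). Qed.

Lemma psi_cyclic_pgroup (q m : nat) (gT : finGroupType) (Y : {group gT}) :
  prime q -> cyclic Y -> #|Y| = (q ^ m)%N ->
  (psi Y * (q + 1) = q ^ (2 * m + 1) + 1)%N.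
Proof.
move=> qpr; elim: m Y => [|m IH] Y cY oY.
  have -> : Y = 1%G by apply/trivGP; rewrite subG1 trivg_card1 oY.
  by rewrite /psi big_set1 order1 expn1 mul1n addnC.
case/cyclicP: cY => y defY.
have oy : #[y]%g = (q ^ m.+1)%N by rewrite orderE -defY.
have q_gt1 := prime_gt1 qpr.
have qdy : q %| #[y]%g by rewrite oy expnS dvdn_mulr.
pose Z := <[(y ^+ q)%g]>%G.
have oZ : #|Z| = (q ^ m)%N.
  by rewrite -orderE orderXdiv // oy expnS mulKn // prime_gt0.
have sZY : Z \subset Y by rewrite defY cycle_subG mem_cycle.
have IHZ := IH Z (cycle_cyclic _) oZ.
have oYZ : {in Y :\: Z, forall g, #[g]%g = (q ^ m.+1)%N}.
  move=> g; rewrite inE defY => /andP[nZg /cycleP[i Eg]]; subst g.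
  have nqi : ~~ (q %| i).
    apply: contra nZg => /dvdnP[j ->].
    by rewrite mulnC expgM mem_cycle.
  rewrite orderXgcd oy.
  have /eqP -> : coprime (q ^ m.+1) i by rewrite coprimeXl // prime_coprime.
  by rewrite divn1.
rewrite /psi (sum_split _ _ _ _ sZY) (eq_bigr _ oYZ) sum_nat_const cardsD (setIidPr sZY).
rewrite -/(psi Z) oZ.

rewrite oY.
have -> : (2 * m.+1 + 1 = (2 * m + 1).+2)%N by lia.
have hb : (q ^ (2 * m + 1) = q * (q ^ m * q ^ m))%N.
  by rewrite addn1 expnS mul2n -addnn expnD.
rewrite !expnS hb in IHZ *.
move: IHZ; set a := q ^ m; set z := psi Z => IHZ.
nia.
Qed.

Lemma sum_mulTI (gT : finGroupType) (H K : {group gT}) (F : gT -> nat) :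
  (H :&: K = 1)%g ->
  (\sum_(g in (H * K)%g) F g = \sum_(h in H) \sum_(k in K) F (h * k)%g)%N.
Proof.
move=> tiHK.
have -> : (H * K)%g = (fun u => u.1 * u.2)%g @: setX H K.
  apply/setP=> g; apply/mulsgP/imsetP=> [[h k Hh Kk ->]|[[h k]]].
    by exists (h, k); rewrite ?inE ?Hh.
  by rewrite inE => /andP[/= Hh Kk] ->; exists h k.
rewrite big_imset /=; last first.
  move=> [h1 k1] [h2 k2] /setXP[/= Hh1 Kk1] /setXP[/= Hh2 Kk2] /= E.
  have E2 : (h2^-1 * h1 = k2 * k1^-1)%g.
    by rewrite -(mulgK k1 h1) E mulgA mulKg.
  have : (h2^-1 * h1 \in H :&: K)%g.
    by rewrite inE groupM ?groupV //= E2 groupM ?groupV.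
  rewrite tiHK inE -eq_mulVg1 => /eqP e; subst h2.
  by move/mulgI: E => ->.
rewrite (pair_big_dep (mem H) (fun _ => mem K)) /=.
by apply: eq_bigl => -[h k]; rewrite inE.
Qed.

Lemma psi_cyclic_mul (gT : finGroupType) (C : {group gT}) (m1 m2 : nat) :
  cyclic C -> #|C| = (m1 * m2)%N -> coprime m1 m2 ->
  exists C1 C2 : {group gT},
    [/\ cyclic C1, cyclic C2, #|C1| = m1, #|C2| = m2 & psi C = (psi C1 * psi C2)%N].
Proof.
case/cyclicP=> c defC oC co12.
have oc : #[c]%g = (m1 * m2)%N by rewrite orderE -defC.
pose C1 := <[(c ^+ m2)%g]>%G; pose C2 := <[(c ^+ m1)%g]>%G.
have m_gt0 : (0 < m1 * m2)%N by rewrite -oC cardG_gt0.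
have o1 : #|C1| = m1.
  by rewrite -orderE orderXdiv oc ?dvdn_mull // mulnK //; move: m_gt0; rewrite muln_gt0 => /andP[].
have o2 : #|C2| = m2.
  by rewrite -orderE orderXdiv oc ?dvdn_mulr // mulKn //; move: m_gt0; rewrite muln_gt0 => /andP[].
have ti : (C1 :&: C2 = 1)%g by apply: coprime_TIg; rewrite o1 o2.
have defC' : C = (C1 * C2)%g :> {set gT}.
  apply/eqP; rewrite eq_sym eqEcard mul_subG ?defC ?cycle_subG ?mem_cycle //=.
  by rewrite TI_cardMg // o1 o2 -defC oC.
exists C1, C2; split; rewrite ?cycle_cyclic //.
rewrite /psi defC' sum_mulTI // big_distrl /=; apply: eq_bigr => u Hu.
rewrite big_distrr /=; apply: eq_bigr => v Hv.
apply: orderM.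
  move: Hu Hv => /cycleP[i ->] /cycleP[j ->].
  by rewrite -!expgM; apply: commuteX2.
apply: (coprime_dvdl (order_dvdG Hu)); apply: (coprime_dvdr (order_dvdG Hv)).
by rewrite o1 o2.
Qed.

Lemma conj_pow (gT : finGroupType) (A : {group gT}) (x : gT) :
  (forall a, a \in A -> (a ^ x = a^-1)%g) ->
  forall i a, a \in A -> (a ^ (x ^+ i) = if odd i then a^-1 else a)%g.
Proof.
move=> hx; elim=> [|i IH] a Aa; first by rewrite expg0 conjg1.
rewrite expgSr conjgM IH //=; case: (odd i) => /=.
  by rewrite conjVg hx // invgK.
by rewrite hx.
Qed.

From mathcomp Require Import ring.

Section Arith.
Local Open Scope ring_scope.
Import Num.Theory.
Lemma arith (p n K g d c c1 c2 aa : nat) : (0 < p)%N ->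
  g = (aa * d + p ^ n * ((2 ^ K.+1 - 2 ^ K) * 2 ^ K.+1))%N ->
  (d * (2 + 1) = 2 ^ (2 * K.+1.-1 + 1) + 1)%N ->
  (c1 * (2 + 1) = 2 ^ (2 * K.+1 + 1) + 1)%N ->
  (c2 * (p + 1) = p ^ (2 * n + 1) + 1)%N ->
  (aa = 1 + (p ^ n - 1) * p)%N ->
  c = (c1 * c2)%N ->
  (g%:R / c%:R : rat)%R =
  ((p%:R + 1) / (p%:R ^+ (2 * n + 1) + 1)
   + (p%:R + 1) * (p%:R ^+ n - 1) / (p%:R ^+ (2 * n + 1) + 1)
     * (((p%:R + 3) * 2%:R ^+ (2 * K.+1 - 1) + p%:R) / (2%:R ^+ (2 * K.+1 + 1) + 1)))%R.
Proof.
move=> p0 hG hD hC1 hC2 hA hC.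
have Npos : (0 < p ^ n)%N by rewrite expn_gt0 p0.
rewrite -!natrX.
have e1 : (2 * K.+1 - 1 = (K + K).+1)%N by lia.
have e2 : (2 * K.+1 + 1 = (K + K).+3)%N by lia.
have e3 : (2 * K.+1.-1 + 1 = (K + K).+1)%N by lia.
have e4 : (2 * n + 1 = (n + n).+1)%N by lia.
rewrite e1 e2 e3 e4 !expnS !expnD in hG hD hC1 hC2 *.
move: Npos hG hD hC1 hC2 hA; set N := (p ^ n)%N; set u := (2 ^ K)%N => Npos hG hD hC1 hC2 hA.
have hA' : (aa + p = 1 + N * p)%N by rewrite hA; nia.
have hG' : (g = aa * d + N * (u * (2 * u)))%N by rewrite hG; congr (_ + _); congr (_ * (_ * _)); lia.
have ra : (aa%:R : rat) = (1 + N * p)%:R - p%:R by rewrite -hA' natrD addrK.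
have rd : (d%:R : rat) = (2 * (u * u) + 1)%:R / (2 + 1)%:R.
  by rewrite -hD natrM mulfK // pnatr_eq0.
have rc1 : (c1%:R : rat) = (2 * (2 * (2 * (u * u))) + 1)%:R / (2 + 1)%:R.
  by rewrite -hC1 natrM mulfK // pnatr_eq0.
have rc2 : (c2%:R : rat) = (p * (N * N) + 1)%:R / (p + 1)%:R.
  by rewrite -hC2 natrM mulfK // pnatr_eq0 addn1.
rewrite hC natrM rc1 rc2 hG' natrD !natrM ra rd.
rewrite !natrD !natrM.
field.
apply/and3P; split; apply: lt0r_neq0; apply: ltr_wpDl; rewrite ?ltr01 ?mulr_ge0 ?ler0n //.
Qed.
End Arith.

Theorem proposition3p9 (p n k : nat) (gT : finGroupType) (G A : {group gT}) (x : gT)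
    (cT : finGroupType) (C : {group cT}) :
  prime p -> odd p -> (0 < n)%N -> (0 < k)%N ->
  (p.-abelem A)%g -> #|A| = (p ^ n)%N ->
  #[x]%g = (2 ^ k)%N ->
  (A ><| <[x]> = G)%g ->
  (forall a, a \in A -> (a ^ x = a^-1)%g) ->
  cyclic C -> #|C| = #|G| ->
  ((psi G)%:R / (psi C)%:R : rat)%R =
  ((p%:R + 1) / (p%:R ^+ (2 * n + 1) + 1)
   + (p%:R + 1) * (p%:R ^+ n - 1) / (p%:R ^+ (2 * n + 1) + 1)
     * (((p%:R + 3) * 2%:R ^+ (2 * k - 1) + p%:R) / (2%:R ^+ (2 * k + 1) + 1)))%R.
Proof.
move=> ppr podd n_gt0 k_gt0 abA oA ox sdG hx cC oC.
case/sdprodP: (sdG) => _ defG _ tiAX.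
have oG : #|G| = (2 ^ k * p ^ n)%N.
  by rewrite -defG TI_cardMg // oA -orderE ox mulnC.
have co2p : coprime 2 p by rewrite coprime2n.
have pr2 : prime 2 by [].
have [C1 [C2 [cC1 cC2 oC1 oC2 psiC]]] :=
  psi_cyclic_mul _ _ _ _ cC (etrans oC oG) (coprimeXl _ (coprimeXr _ co2p)).
have psiC1 := psi_cyclic_pgroup _ _ _ _ pr2 cC1 oC1.
have psiC2 := psi_cyclic_pgroup _ _ _ _ ppr cC2 oC2.
have psiA : psi A = (1 + (p ^ n - 1) * p)%N.
  rewrite /psi (sum_split _ 1%G A) ?sub1G //= big_set1 order1.
  rewrite (eq_bigr (fun _ => p)); last first.
    by move=> a; rewrite !inE => /andP[a1 Aa]; apply: (abelem_order_p abA).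
  by rewrite sum_nat_const cardsD (setIidPr (sub1G A)) cards1 oA.
pose D := <[(x ^+ 2)%g]>%G.
have oD : #|D| = (2 ^ k.-1)%N.
  rewrite -orderE orderXdiv ox; last by rewrite -(prednK k_gt0) expnS dvdn_mulr.
  by rewrite -(prednK k_gt0) expnS mulKn.
have psiD := psi_cyclic_pgroup _ _ _ _ pr2 (cycle_cyclic _) oD.
have sDX : D \subset <[x]>%g by rewrite cycle_subG mem_cycle.
have hcj := conj_pow _ _ _ hx.
have oAD : {in A & D, forall a h, #[(a * h)%g]%g = (#[a]%g * #[h]%g)%N}.
  move=> a h Aa Dh; apply: orderM.
    move: Dh => /cycleP[j ->]; rewrite -expgM /commute conjgC hcj //.
    by rewrite oddM andFb.
  apply: (coprime_dvdl (order_dvdG Aa)); apply: (coprime_dvdr (order_dvdG Dh)).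
  by rewrite oA oD coprimeXl // coprimeXr // coprimen2.
have oAXD : {in A & (<[x]> :\: D)%g, forall a h, #[(a * h)%g]%g = (2 ^ k)%N}.
  move=> a h Aa; rewrite inE => /andP[nDh /cycleP[i Eh]]; subst h.
  have oi : odd i.
    apply: contraR nDh; rewrite -dvdn2 => /dvdnP[j ->].
    by rewrite mulnC expgM mem_cycle.
  have oh : #[(x ^+ i)%g]%g = (2 ^ k)%N.
    rewrite orderXgcd ox.
    have /eqP -> : coprime (2 ^ k) i by rewrite coprimeXl // coprime2n.
    by rewrite divn1.
  set h := (x ^+ i)%g in oh *.
  have Xh : h \in <[x]>%g by rewrite mem_cycle.
  have ha : (a^-1 ^ h = a)%g by rewrite hcj ?groupV // oi invgK.
  have sq : ((a * h) ^+ 2 = h ^+ 2)%g.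
    have e : (h * a = a^-1 * h)%g by rewrite [RHS]conjgC ha.
    by rewrite !expgS !expg0 !mulg1 -mulgA (mulgA h) e !mulgA mulgV mul1g.
  have d : (#[(a * h)%g]%g %| 2 ^ k)%N.
    rewrite order_dvdn -(prednK k_gt0) expnS !expgM sq -expgM -expnS prednK //.
    by rewrite -oh expg_order.
  have nd : ~~ (#[(a * h)%g]%g %| 2 ^ k.-1)%N.
    rewrite order_dvdn; case: (ltngtP k 1) => [|kgt1|k1]; first by rewrite ltnNge k_gt0.
      have -> : k.-1 = (k.-2).+1 by move: kgt1; clear; lia.
      rewrite expnS expgM sq -expgM -expnS -order_dvdn oh.
      apply/negP => /dvdn_leq; rewrite expn_gt0 /= => /(_ isT).
      by rewrite leq_exp2l //; move: kgt1; clear; lia.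
    rewrite k1 /= expg1; apply/eqP => e1.
    have hA : h = a^-1%g by apply: (mulgI a); rewrite e1 mulgV.
    have : h \in (A :&: <[x]>)%g by rewrite inE Xh hA groupV Aa.
    rewrite tiAX inE => /eqP h1; move: oh; rewrite h1 order1 k1.
    by rewrite expn1.
  case/(dvdn_pfactor _ _ pr2): d => j jk oj.
  rewrite oj; case: (ltngtP j k) => [jlt|jgt|-> //].
    by move: nd; rewrite oj dvdn_exp2l // -ltnS prednK.
  by rewrite leqNgt jgt in jk.
have psiG : psi G = (psi A * psi D + p ^ n * ((2 ^ k - 2 ^ k.-1) * 2 ^ k))%N.
  rewrite /psi -defG sum_mulTI //.
  rewrite (eq_bigr (fun a => #[a]%g * psi D + (2 ^ k - 2 ^ k.-1) * 2 ^ k)%N); last first.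
    move=> a Aa; rewrite (sum_split _ _ _ _ sDX).
    rewrite (eq_bigr _ (fun h Dh => oAD a h Aa Dh)) -big_distrr /=.
    rewrite (eq_bigr _ (fun h Dh => oAXD a h Aa Dh)) sum_nat_const.
    by rewrite cardsD (setIidPr sDX) -orderE ox oD.
  by rewrite big_split /= -big_distrl sum_nat_const oA.
have ek : k = k.-1.+1 by rewrite prednK.
move: psiG psiD psiC1 psiC2 psiA psiC.
move: (psi G) (psi D) (psi C) (psi C1) (psi C2) (psi A) => g d c c1 c2 aa.
rewrite ek; move: (k.-1) => K.
exact: arith (prime_gt0 ppr).
Qed.
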